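(* $\mathsf{BA}^\mathsf{S}$ is an allegory, and the functors $\mathsf{Clop}$ and $\mathsf{Ult}$ yield an equivalence of allegories between $\mathsf{Stone}^{\mathsf{R}}$ and $\mathsf{BA}^\mathsf{S}$. In particular, for closed relations $R_1,R_2\colon X\to Y$ between Stone spaces, $R_1\subseteq R_2$ iff $S_{R_2}\subseteq S_{R_1}$; for subordinations $S_1,S_2\colon A\to B$, $S_1\subseteq S_2$ iff $R_{S_2}\subseteq R_{S_1}$; and $S_{\breve R}=(S_R)^\dagger$, $R_{S^\dagger}=\breve{(R_S)}$.
   Context: An order-enriched category is a category whose hom-sets are partially ordered such that $f\le f'$ and $g\le g'$ imply $gf\le g'f'$. A dagger on a category is a contravariant endofunctor $(-)^\dagger$ which is the identity on objects and satisfies $f^{\dagger\dagger}=f$. An allegory is an order-enriched category with a dagger such that each hom-set has binary meets, $f\le g$ implies $f^\dagger\le g^\dagger$, and the modular law $gf\wedge h\le(g\wedge hf^\dagger)f$ holds for all $f\colon C\to D$, $g\colon D\to E$, $h\colon C\to E$. A morphism of allegories is a functor preserving binary meets of morphisms and commuting with the daggers; an equivalence of allegories is a morphism of allegories that is an equivalence of categories. $\mathsf{Stone}^{\mathsf{R}}$: objects Stone spaces (zero-dimensional compact Hausdorff spaces), morphisms closed relations $R\subseteq X\times Y$, identities identity relations, composition relational composition, hom-sets ordered by inclusion, dagger the converse relation $\breve R$ ($y\mathrel{\breve R}x$ iff $x\mathrel{R}y$). A subordination $S\colon A\to B$ between boolean algebras is a relation satisfying: (S1) $0\mathrel{S}0$,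 $1\mathrel{S}1$; (S2) $a,b\mathrel{S}c\Rightarrow(a\vee b)\mathrel{S}c$; (S3) $a\mathrel{S}c,d\Rightarrow a\mathrel{S}(c\wedge d)$; (S4) $a\le b\mathrel{S}c\le d\Rightarrow a\mathrel{S}d$. $\mathsf{BA}^\mathsf{S}$: boolean algebras and subordinations, identity $\le$, relational composition, hom-sets ordered by reverse inclusion, and dagger $S^\dagger\colon B\to A$ defined by $b\mathrel{S^\dagger}a$ iff $\neg a\mathrel{S}\neg b$. $\mathsf{Clop}$ sends a Stone space $X$ to the boolean algebra of clopens and a closed relation $R$ to $S_R$ with $U\mathrel{S_R}V\iff R[U]\subseteq V$; $\mathsf{Ult}$ sends a boolean algebra $A$ to its Stone space of ultrafilters and a subordination $S$ to $R_S$ with $x\mathrel{R_S}y\iff S[x]\subseteq y$. *)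

(* Defs.v *)
From HB Require Import structures.
From mathcomp Require Import all_boot all_order.
From mathcomp Require Import boolp classical_sets functions topology.
Set Implicit Arguments.
Unset Strict Implicit.
Unset Printing Implicit Defensive.
Import Order.TTheory.
Local Open Scope classical_set_scope.
Local Open Scope order_scope.

(** * Stone spaces and closed relations (the category Stone^R)        *)

Definition stone_space (X : topologicalType) : Prop :=
  [/\ compact [set: X], hausdorff_space X & zero_dimensional X].

(** Relations X -> Y are subsets of X * Y (product topology). *)
Definition rel_id (X : Type) : set (X * X) := [set p | p.1 = p.2].
Arguments rel_id : clear implicits.
Definition rel_comp (X Y Z : Type) (R : set (X * Y)) (R' : set (Y * Z))
  : set (X * Z) := [set p | exists y, R (p.1, y) /\ R' (y, p.2)].
Definition rel_conv (X Y : Type) (R : set (X * Y)) : set (Y * X) :=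
  [set p | R (p.2, p.1)].
Definition rel_image (X Y : Type) (R : set (X * Y)) (U : set X) : set Y :=
  [set y | exists2 x, U x & R (x, y)].

(** * Boolean algebras and subordinations (the category BA^S)          *)
(* Boolean algebras are MathComp's complemented distributive lattices
   with top and bottom, [ctbDistrLatticeType d]. *)

Section Subordinations.
Context {d1 d2 d3 : Order.disp_t}.

Definition subordination {A : ctbDistrLatticeType d1}
    {B : ctbDistrLatticeType d2} (S : A -> B -> Prop) : Prop :=
  [/\ S \bot \bot /\ S \top \top,
      (forall a b c, S a c -> S b c -> S (a `|` b) c),
      (forall a c e, S a c -> S a e -> S a (c `&` e)) &
      (forall a b c e, a <= b -> S b c -> c <= e -> S a e)].

Definition sub_id (A : ctbDistrLatticeType d1) : A -> A -> Prop :=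
  fun a b => a <= b.

Definition sub_comp {A : ctbDistrLatticeType d1} {B : ctbDistrLatticeType d2}
    {C : ctbDistrLatticeType d3} (S : A -> B -> Prop) (T : B -> C -> Prop)
  : A -> C -> Prop := fun a c => exists b, S a b /\ T b c.

Definition sub_dagger {A : ctbDistrLatticeType d1}
    {B : ctbDistrLatticeType d2} (S : A -> B -> Prop) : B -> A -> Prop :=
  fun b a => S (~` a) (~` b).

(** hom-sets ordered by REVERSE inclusion: S <= S' iff S' is included in S *)
Definition sub_le {A : ctbDistrLatticeType d1} {B : ctbDistrLatticeType d2}
    (S S' : A -> B -> Prop) : Prop := forall a b, S' a b -> S a b.

Definition sub_is_meet {A : ctbDistrLatticeType d1}
    {B : ctbDistrLatticeType d2} (S1 S2 M : A -> B -> Prop) : Prop :=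
  [/\ subordination M, sub_le M S1, sub_le M S2 &
      forall N, subordination N -> sub_le N S1 -> sub_le N S2 -> sub_le N M].

End Subordinations.

Fact clop_display : Order.disp_t. Proof. exact: Order.Disp tt tt. Qed.

Definition clop (X : topologicalType) : Type := set_type (@clopen X).

Section ClopLattice.
Variable X : topologicalType.
Local Notation C := (clop X).

HB.instance Definition _ := Choice.on C.

Definition clop_meet (U V : C) : C :=
  SigSub (mem_set (clopenI (set_valP U) (set_valP V))).
Definition clop_join (U V : C) : C :=
  SigSub (mem_set (clopenU (set_valP U) (set_valP V))).
Definition clop_bot : C := SigSub (mem_set (@clopen0 X)).
Definition clop_top : C := SigSub (mem_set (@clopenT X)).
Definition clop_compl (U : C) : C :=
  SigSub (mem_set (@clopenC X (val U) set0 (set_valP U))).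
Definition clop_le (U V : C) : bool := clop_meet U V == U.
Definition clop_lt (U V : C) : bool := (V != U) && clop_le U V.

Let clop_eq (U V : C) : val U = val V -> U = V.
Proof. exact: val_inj. Qed.

Fact clop_le_def (U V : C) : clop_le U V = (clop_meet U V == U).
Proof. by []. Qed.
Fact clop_lt_def (U V : C) : clop_lt U V = (V != U) && clop_le U V.
Proof. by []. Qed.
Fact clop_meetC : commutative clop_meet.
Proof. by move=> U V; apply: clop_eq; rewrite /= setIC. Qed.
Fact clop_joinC : commutative clop_join.
Proof. by move=> U V; apply: clop_eq; rewrite /= setUC. Qed.
Fact clop_meetA : associative clop_meet.
Proof. by move=> U V W; apply: clop_eq; rewrite /= setIA. Qed.
Fact clop_joinA : associative clop_join.
Proof. by move=> U V W; apply: clop_eq; rewrite /= setUA. Qed.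
Fact clop_joinKI (V U : C) : clop_meet U (clop_join U V) = U.
Proof. by apply: clop_eq; rewrite /= setUC setKU. Qed.
Fact clop_meetKU (V U : C) : clop_join U (clop_meet U V) = U.
Proof. by apply: clop_eq; rewrite /= setIC setKI. Qed.
Fact clop_meetUl : left_distributive clop_meet clop_join.
Proof. by move=> U V W; apply: clop_eq; rewrite /= setIUl. Qed.
Fact clop_meetxx : idempotent_op clop_meet.
Proof. by move=> U; apply: clop_eq; rewrite /= setIid. Qed.

HB.instance Definition _ := Order.isMeetJoinDistrLattice.Build clop_display C
  clop_le_def clop_lt_def clop_meetC clop_joinC clop_meetA clop_joinA
  clop_joinKI clop_meetKU clop_meetUl clop_meetxx.

Fact clop_le0x (U : C) : clop_bot <= U.
Proof. by apply/eqP/clop_eq; rewrite /= set0I. Qed.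
Fact clop_lex1 (U : C) : U <= clop_top.
Proof. by apply/eqP/clop_eq; rewrite /= setIT. Qed.

HB.instance Definition _ := Order.hasBottom.Build clop_display C clop_le0x.
HB.instance Definition _ := Order.hasTop.Build clop_display C clop_lex1.

Fact clop_joinxC (U : C) : U `|` clop_compl U = \top.
Proof. by apply: clop_eq; rewrite /= setUv. Qed.
Fact clop_meetxC (U : C) : U `&` clop_compl U = \bot.
Proof. by apply: clop_eq; rewrite /= setICr. Qed.

HB.instance Definition _ :=
  Order.TBDistrLattice_hasComplement.Build clop_display C clop_joinxC clop_meetxC.

End ClopLattice.

Definition Clop (X : topologicalType) : ctbDistrLatticeType clop_display :=
  clop X.

Definition S_of (X Y : topologicalType) (R : set (X * Y))
  : Clop X -> Clop Y -> Prop :=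
  fun U V => rel_image R (val U) `<=` val V.

Section Ultrafilters.
Context {d : Order.disp_t} (A : ctbDistrLatticeType d).

Definition ba_filter (F : set A) : Prop :=
  [/\ F \top, (forall a b, F a -> a <= b -> F b) &
      (forall a b, F a -> F b -> F (a `&` b))].

Definition ba_ultrafilter (F : set A) : Prop :=
  [/\ ba_filter F, ~ F \bot &
      forall G, ba_filter G -> ~ G \bot -> F `<=` G -> G = F].

(** Points of Ult A are the characteristic functions of ultrafilters,
    viewed inside the product space 2^A = {ptws A -> bool}; the
    topology is the subspace topology, i.e. the Stone topology
    generated by the sets {x | a \in x}. *)
Definition ult_points : set {ptws A -> bool} :=
  [set f | ba_ultrafilter [set a | f a]].

End Ultrafilters.

Definition ult (d : Order.disp_t) (A : ctbDistrLatticeType d) : Type :=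
  set_type (@ult_points d A).
HB.instance Definition _ (d : Order.disp_t) (A : ctbDistrLatticeType d) :=
  Topological.on (@ult d A).

Definition Ult (d : Order.disp_t) (A : ctbDistrLatticeType d)
  : topologicalType := @ult d A.

Definition uf {d : Order.disp_t} {A : ctbDistrLatticeType d} (x : Ult A)
  : set A := [set a | val x a].

Definition sub_image {d1 d2 : Order.disp_t} {A : ctbDistrLatticeType d1}
    {B : ctbDistrLatticeType d2} (S : A -> B -> Prop) (F : set A) : set B :=
  [set b | exists2 a, F a & S a b].

Definition R_of {d1 d2 : Order.disp_t} {A : ctbDistrLatticeType d1}
    {B : ctbDistrLatticeType d2} (S : A -> B -> Prop)
  : set (Ult A * Ult B) :=
  [set p | sub_image S (uf p.1) `<=` uf p.2].
Arguments sub_id {d1} A _ _.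


Definition BAS_is_allegory : Prop :=
  (forall d (A : ctbDistrLatticeType d), subordination (sub_id A)) /\
  (forall d1 d2 d3 (A : ctbDistrLatticeType d1) (B : ctbDistrLatticeType d2)
     (C : ctbDistrLatticeType d3) (S : A -> B -> Prop) (T : B -> C -> Prop),
     subordination S -> subordination T -> subordination (sub_comp S T)) /\
  (forall d1 d2 (A : ctbDistrLatticeType d1) (B : ctbDistrLatticeType d2)
     (S : A -> B -> Prop), subordination S ->
     sub_comp (sub_id A) S = S /\ sub_comp S (sub_id B) = S) /\
  (forall d1 d2 d3 d4 (A : ctbDistrLatticeType d1) (B : ctbDistrLatticeType d2)
     (C : ctbDistrLatticeType d3) (D : ctbDistrLatticeType d4)
     (S : A -> B -> Prop) (T : B -> C -> Prop) (U : C -> D -> Prop),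
     subordination S -> subordination T -> subordination U ->
     sub_comp (sub_comp S T) U = sub_comp S (sub_comp T U)) /\
  (forall d1 d2 (A : ctbDistrLatticeType d1) (B : ctbDistrLatticeType d2)
     (S S' S'' : A -> B -> Prop),
     subordination S -> subordination S' -> subordination S'' ->
     [/\ sub_le S S, (sub_le S S' -> sub_le S' S'' -> sub_le S S'') &
         (sub_le S S' -> sub_le S' S -> S = S')]) /\
  (forall d1 d2 d3 (A : ctbDistrLatticeType d1) (B : ctbDistrLatticeType d2)
     (C : ctbDistrLatticeType d3) (S S' : A -> B -> Prop)
     (T T' : B -> C -> Prop),
     subordination S -> subordination S' ->
     subordination T -> subordination T' ->
     sub_le S S' -> sub_le T T' -> sub_le (sub_comp S T) (sub_comp S' T')) /\
  (forall d1 d2 (A : ctbDistrLatticeType d1) (B : ctbDistrLatticeType d2)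
     (S : A -> B -> Prop), subordination S -> subordination (sub_dagger S)) /\
  (forall d (A : ctbDistrLatticeType d), sub_dagger (sub_id A) = sub_id A) /\
  (forall d1 d2 d3 (A : ctbDistrLatticeType d1) (B : ctbDistrLatticeType d2)
     (C : ctbDistrLatticeType d3) (S : A -> B -> Prop) (T : B -> C -> Prop),
     subordination S -> subordination T ->
     sub_dagger (sub_comp S T) = sub_comp (sub_dagger T) (sub_dagger S)) /\
  (forall d1 d2 (A : ctbDistrLatticeType d1) (B : ctbDistrLatticeType d2)
     (S : A -> B -> Prop), subordination S -> sub_dagger (sub_dagger S) = S) /\
  (forall d1 d2 (A : ctbDistrLatticeType d1) (B : ctbDistrLatticeType d2)
     (S S' : A -> B -> Prop), subordination S -> subordination S' ->
     sub_le S S' -> sub_le (sub_dagger S) (sub_dagger S')) /\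
  (forall d1 d2 (A : ctbDistrLatticeType d1) (B : ctbDistrLatticeType d2)
     (S1 S2 : A -> B -> Prop), subordination S1 -> subordination S2 ->
     exists M, sub_is_meet S1 S2 M) /\
  (* modular law:  g f /\ h <= (g /\ h f^dagger) f
     for f : C -> D, g : D -> E, h : C -> E *)
  (forall d1 d2 d3 (C : ctbDistrLatticeType d1) (D : ctbDistrLatticeType d2)
     (E : ctbDistrLatticeType d3) (f : C -> D -> Prop) (g : D -> E -> Prop)
     (h : C -> E -> Prop) (M1 : C -> E -> Prop) (M2 : D -> E -> Prop),
     subordination f -> subordination g -> subordination h ->
     sub_is_meet (sub_comp f g) h M1 ->
     sub_is_meet g (sub_comp (sub_dagger f) h) M2 ->
     sub_le M1 (sub_comp f M2)).

(** Clop : Stone^R -> BA^S is a morphism of allegories (a functor that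
    preserves binary meets -- intersections in Stone^R -- and daggers). *)
Definition Clop_is_allegory_morphism : Prop :=
  (forall (X Y : topologicalType) (R : set (X * Y)),
     stone_space X -> stone_space Y -> closed R -> subordination (S_of R)) /\
  (forall X : topologicalType, stone_space X ->
     S_of (rel_id X) = sub_id (Clop X)) /\
  (forall (X Y Z : topologicalType) (R : set (X * Y)) (R' : set (Y * Z)),
     stone_space X -> stone_space Y -> stone_space Z ->
     closed R -> closed R' ->
     S_of (rel_comp R R') = sub_comp (S_of R) (S_of R')) /\
  (forall (X Y : topologicalType) (R1 R2 : set (X * Y)),
     stone_space X -> stone_space Y -> closed R1 -> closed R2 ->
     sub_is_meet (S_of R1) (S_of R2) (S_of (R1 `&` R2)%classic)) /\
  (forall (X Y : topologicalType) (R : set (X * Y)),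
     stone_space X -> stone_space Y -> closed R ->
     S_of (rel_conv R) = sub_dagger (S_of R)).

Definition Ult_is_allegory_morphism : Prop :=
  (forall d (A : ctbDistrLatticeType d), stone_space (Ult A)) /\
  (forall d1 d2 (A : ctbDistrLatticeType d1) (B : ctbDistrLatticeType d2)
     (S : A -> B -> Prop), subordination S -> closed (R_of S)) /\
  (forall d (A : ctbDistrLatticeType d), R_of (sub_id A) = rel_id (Ult A)) /\
  (forall d1 d2 d3 (A : ctbDistrLatticeType d1) (B : ctbDistrLatticeType d2)
     (C : ctbDistrLatticeType d3) (S : A -> B -> Prop) (T : B -> C -> Prop),
     subordination S -> subordination T ->
     R_of (sub_comp S T) = rel_comp (R_of S) (R_of T)) /\
  (forall d1 d2 (A : ctbDistrLatticeType d1) (B : ctbDistrLatticeType d2)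
     (S1 S2 M : A -> B -> Prop), subordination S1 -> subordination S2 ->
     sub_is_meet S1 S2 M -> R_of M = (R_of S1 `&` R_of S2)%classic) /\
  (forall d1 d2 (A : ctbDistrLatticeType d1) (B : ctbDistrLatticeType d2)
     (S : A -> B -> Prop), subordination S ->
     R_of (sub_dagger S) = rel_conv (R_of S)).

Definition stone_iso (X Y : topologicalType) (R : set (X * Y)) : Prop :=
  closed R /\ exists R' : set (Y * X),
    [/\ closed R', rel_comp R R' = rel_id X & rel_comp R' R = rel_id Y].

Definition sub_iso {d1 d2 : Order.disp_t} {A : ctbDistrLatticeType d1}
    {B : ctbDistrLatticeType d2} (S : A -> B -> Prop) : Prop :=
  subordination S /\ exists S' : B -> A -> Prop,
    [/\ subordination S', sub_comp S S' = sub_id A & sub_comp S' S = sub_id B].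

(** Clop and Ult are quasi-inverse: there are natural isomorphisms
    Id ~= Ult o Clop (on Stone^R) and Clop o Ult ~= Id (on BA^S). *)
Definition Clop_Ult_quasi_inverse : Prop :=
  (exists eta : forall X : topologicalType, set (X * Ult (Clop X)),
     (forall X : topologicalType, stone_space X -> stone_iso (eta X)) /\
     (forall (X Y : topologicalType) (R : set (X * Y)),
        stone_space X -> stone_space Y -> closed R ->
        rel_comp (eta X) (R_of (S_of R)) = rel_comp R (eta Y))) /\
  (exists eps : forall d (A : ctbDistrLatticeType d), Clop (Ult A) -> A -> Prop,
     (forall d (A : ctbDistrLatticeType d), sub_iso (eps d A)) /\
     (forall d1 d2 (A : ctbDistrLatticeType d1) (B : ctbDistrLatticeType d2)
        (S : A -> B -> Prop), subordination S ->
        sub_comp (eps d1 A) S = sub_comp (S_of (R_of S)) (eps d2 B))).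

(* Main.v *)
Require Import Defs.
From HB Require Import structures.
From mathcomp Require Import all_boot all_order.
From mathcomp Require Import boolp classical_sets functions topology.
From mathcomp Require Import mathcomp_extra.
Set Implicit Arguments.
Unset Strict Implicit.
Unset Printing Implicit Defensive.
Import Order.TTheory Order.Theory.
Local Open Scope classical_set_scope.
Local Open Scope order_scope.

Section UF.
Context {d : Order.disp_t} {A : ctbDistrLatticeType d}.
Implicit Types (F G J : set A) (a b c : A).

Definition ba_ideal J : Prop :=
  [/\ J \bot, (forall a b, J b -> a <= b -> J a) &
      (forall a b, J a -> J b -> J (a `|` b))].

Lemma bf_top F : ba_filter F -> F \top. Proof. by case. Qed.
Lemma bfS F a b : ba_filter F -> F a -> a <= b -> F b.
Proof. by case=> _ h _; exact: h. Qed.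
Lemma bfI F a b : ba_filter F -> F a -> F b -> F (a `&` b).
Proof. by case=> _ _ h; exact: h. Qed.

Lemma ultra_filter F : ba_ultrafilter F -> ba_filter F. Proof. by case. Qed.
Lemma ultra_bot F : ba_ultrafilter F -> ~ F \bot. Proof. by case. Qed.

Lemma ultra_compl F a : ba_ultrafilter F -> F a \/ F (~` a).
Proof.
move=> [fF nb mx]; have [|Fa] := pselect (F a); first by left.
right.
pose G := [set c | exists2 f, F f & f `&` a <= c].
have fG : ba_filter G.
  split.
  - by exists \top; [exact: bf_top|rewrite lex1].
  - by move=> u v [f Ff le1] uv; exists f => //; exact: le_trans uv.
  - move=> u v [f Ff le1] [g Fg le2]; exists (f `&` g); first exact: bfI.
    rewrite lexI; apply/andP; split.
      by apply: le_trans le1; rewrite leI2 // leIl.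
    by apply: le_trans le2; rewrite leI2 // leIr.
have FG : F `<=` G by move=> f Ff; exists f => //; rewrite leIl.
have Ga : G a by exists \top; [exact: bf_top|rewrite meet1x].
have [Gb|nGb] := pselect (G \bot); last first.
  by have := mx G fG nGb FG => GF; exfalso; apply: Fa; rewrite -GF.
case: Gb => f Ff; rewrite lex0 => /eqP fa.
apply: bfS Ff _ => //; rewrite -disj_leC; exact/eqP.
Qed.

Lemma ultra_notboth F a : ba_ultrafilter F -> F a -> F (~` a) -> False.
Proof.
move=> uF Fa Fna; apply: (ultra_bot uF).
by rewrite -(meetxC a); apply: bfI => //; exact: ultra_filter.
Qed.

Lemma ultra_join F a b : ba_ultrafilter F -> F (a `|` b) -> F a \/ F b.
Proof.
move=> uF Fab; have [Fa|Fna] := ultra_compl a uF; first by left.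
have [Fb|Fnb] := ultra_compl b uF; first by right.
exfalso; apply: (ultra_notboth uF Fab).
by rewrite complU; apply: bfI => //; exact: ultra_filter.
Qed.

Lemma complete_ultra F : ba_filter F -> ~ F \bot ->
  (forall a, F a \/ F (~` a)) -> ba_ultrafilter F.
Proof.
move=> fF nb cF; split => // G fG nGb FG.
apply/seteqP; split => // a Ga.
have [//|Fna] := cF a; exfalso; apply: nGb.
by rewrite -(meetxC a); apply: bfI => //; exact: FG.
Qed.

Lemma sep_ultra F J : ba_filter F -> ba_ideal J -> (forall a, F a -> ~ J a) ->
  exists U, [/\ ba_ultrafilter U, F `<=` U & forall a, U a -> ~ J a].
Proof.
move=> fF [J0 JS JU] FJ.
pose good (G : set A) := [/\ ba_filter G, F `<=` G & forall a, G a -> ~ J a].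
pose P (G : set A) := G = set0 \/ good G.
have [M [PM Mmax]] : exists M, P M /\ forall B, M `<` B -> ~ P B.
  apply: Zorn_bigcup => C CP Ctot.
  have [Cne|C0] := pselect (exists G, C G /\ G !=set0); last first.
    left; apply/seteqP; split => // x [G CG Gx]; apply: C0; exists G; split => //.
    by exists x.
  case: Cne => G0 [CG0 [x0 G0x0]].
  have gC G : C G -> G !=set0 -> good G.
    by move=> CG [y Gy]; case: (CP G CG) => // G0e; rewrite G0e in Gy.
  have gG0 := gC G0 CG0 (ex_intro _ x0 G0x0).
  right; split; [split| |].
  - by exists G0 => //; case: gG0 => /bf_top.
  - move=> a b [G CG Ga] ab; exists G => //.
    by case: (gC G CG (ex_intro _ a Ga)) => fG _ _; exact: bfS ab.
  - move=> a b [G CG Ga] [H CH Hb].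
    have [GH|HG] := Ctot G H CG CH.
    + exists H => //; case: (gC H CH (ex_intro _ b Hb)) => fH _ _.
      by apply: bfI => //; exact: GH.
    + exists G => //; case: (gC G CG (ex_intro _ a Ga)) => fG _ _.
      by apply: bfI => //; exact: HG.
  - by move=> a Fa; exists G0 => //; case: gG0 => _ h _; exact: h.
  - by move=> a [G CG Ga]; case: (gC G CG (ex_intro _ a Ga)) => _ _; apply.
have gF : good F by split.
have gM : good M.
  case: PM => // M0; exfalso; apply: (Mmax F); last by right.
  rewrite M0; split; first exact: sub0set.
  move=> /(_ \top) h; have := h (bf_top fF); by [].
case: gM => fM FM MJ.
have cM a : M a \/ M (~` a).
  have [Ma|nMa] := pselect (M a); first by left.
  have [Mna|nMna] := pselect (M (~` a)); first by right.
  exfalso.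
  pose ext b := [set c | exists2 f, M f & f `&` b <= c].
  have fext b : ba_filter (ext b).
    split.
    - by exists \top; [exact: bf_top|rewrite lex1].
    - by move=> u v [f Ff le1] uv; exists f => //; exact: le_trans uv.
    - move=> u v [f Ff le1] [g Fg le2]; exists (f `&` g); first exact: bfI.
      rewrite lexI; apply/andP; split.
        by apply: le_trans le1; rewrite leI2 // leIl.
      by apply: le_trans le2; rewrite leI2 // leIr.
  have Mext b : M `<=` ext b by move=> f Mf; exists f => //; rewrite leIl.
  have extb b : ext b b by exists \top; [exact: bf_top|rewrite meet1x].
  have notgood b : ~ M b -> exists2 j, J j & exists2 f, M f & f `&` b <= j.
    move=> nMb; apply: contrapT => hn.
    apply: (Mmax (ext b)); last first.
      right; split => //; first by move=> f /FM /Mext.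
      move=> c [f Mf le] Jc; apply: hn; exists c => //; by exists f.
    split => //; move=> /(_ b) h; apply: nMb; exact: h.
  have [j1 Jj1 [f1 Mf1 le1]] := notgood a nMa.
  have [j2 Jj2 [f2 Mf2 le2]] := notgood (~` a) nMna.
  apply: (MJ (f1 `&` f2)); first exact: bfI.
  apply: (JS _ (j1 `|` j2)); first exact: JU.
  have -> : f1 `&` f2 = (f1 `&` f2 `&` a) `|` (f1 `&` f2 `&` ~` a).
    by rewrite -meetUr joinxC meetx1.
  rewrite leU2 //.
    by apply: le_trans le1; rewrite leI2 // leIl.
  by apply: le_trans le2; rewrite leI2 // leIr.
exists M; split => //; apply: complete_ultra => //.
by move=> /MJ; apply.
Qed.

End UF.

Section Points.
Context {d : Order.disp_t} {A : ctbDistrLatticeType d}.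

Lemma uf_ultra (x : Ult A) : ba_ultrafilter (uf x).
Proof. exact: (set_valP x). Qed.

Lemma uf_filter (x : Ult A) : ba_filter (uf x).
Proof. exact: (ultra_filter (uf_ultra x)). Qed.
Lemma uf_top (x : Ult A) : uf x \top.
Proof. exact: (bf_top (uf_filter x)). Qed.

Lemma asbool_set (U : set A) : [set a | `[< U a >]] = U.
Proof. by apply/seteqP; split => a /=; rewrite asboolE. Qed.

Definition mkpt (U : set A) (h : ba_ultrafilter U) : Ult A :=
  @exist _ _ (fun a => `[< U a >] : bool)
    (mem_set (eq_ind_r (fun V : set A => ba_ultrafilter V) h (asbool_set U))).

Lemma uf_mkpt U h : uf (@mkpt U h) = U.
Proof. exact: asbool_set. Qed.

Lemma uf_inj (x y : Ult A) : uf x = uf y -> x = y.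
Proof.
move=> e; apply: val_inj; apply: funext => a.
have := congr1 (fun F => F a) e; rewrite /uf /=.
case: (val x a); case: (val y a) => //= h.
- by have := h; rewrite propeqE => -[/(_ isT)].
- by have := h; rewrite propeqE => -[_ /(_ isT)].
Qed.

End Points.

Section SubAlg.
Context {d1 d2 : Order.disp_t} {A : ctbDistrLatticeType d1}
  {B : ctbDistrLatticeType d2}.
Implicit Types (S T : A -> B -> Prop).

Lemma sub_bot S : subordination S -> S \bot \bot. Proof. by case=> -[]. Qed.
Lemma sub_top S : subordination S -> S \top \top. Proof. by case=> -[]. Qed.
Lemma sub_join S a a' b : subordination S -> S a b -> S a' b -> S (a `|` a') b.
Proof. by case=> _ h _ _; exact: h. Qed.
Lemma sub_meet S a b b' : subordination S -> S a b -> S a b' -> S a (b `&` b').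
Proof. by case=> _ _ h _; exact: h. Qed.
Lemma sub_mono S a a' b b' : subordination S -> a <= a' -> S a' b -> b <= b' -> S a b'.
Proof. by case=> _ _ _ h; exact: h. Qed.

Lemma sub_image_filter S (F : set A) : subordination S -> ba_filter F ->
  ba_filter (sub_image S F).
Proof.
move=> sS fF; split.
- by exists \top; [exact: bf_top|exact: sub_top].
- by move=> b b' [a Fa Sab] bb'; exists a => //; exact: sub_mono Sab bb'.
- move=> b b' [a Fa Sab] [a' Fa' Sab']; exists (a `&` a'); first exact: bfI.
  by apply: sub_meet => //; [apply: sub_mono Sab _|apply: sub_mono Sab' _];
    rewrite ?leIl ?leIr.
Qed.

Lemma key_sub S a b : subordination S -> ~ S a b ->
  exists x y, [/\ uf x a, ~ uf y b & R_of S (x, y)].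
Proof.
move=> sS nSab.
have H1 : ba_filter [set c | a <= c].
  split => /=; first exact: lex1.
    by move=> u v /= au uv; exact: le_trans uv.
  by move=> u v au av /=; rewrite lexI au av.
have H2 : ba_ideal [set c | S c b].
  split => /=.
  + by apply: sub_mono (sub_bot sS) _ => //; rewrite le0x.
  + by move=> u v Svb uv; exact: sub_mono Svb _.
  + by move=> u v Su Sv; exact: sub_join.
have H3 : forall c, a <= c -> ~ S c b.
  by move=> c /= ac Scb; apply: nSab; exact: sub_mono Scb _.
have [U [uU aU UJ]] := @sep_ultra _ A [set c | a <= c] [set c | S c b] H1 H2 H3.
have H4 : ba_filter (sub_image S U) by exact/sub_image_filter/ultra_filter.
have H5 : ba_ideal [set c | c <= b].
  split => /=; first by rewrite le0x.
  + by move=> u v vb uv; exact: le_trans vb.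
  + by move=> u v ub vb; rewrite leUx ub vb.
have H6 : forall c, sub_image S U c -> ~ c <= b.
  by move=> c [u Uu Suc] cb; apply: (UJ u) => //; exact: sub_mono Suc cb.
have [V [uV SV VJ]] := @sep_ultra _ B (sub_image S U) [set c | c <= b] H4 H5 H6.
exists (mkpt uU), (mkpt uV); split.
- by rewrite uf_mkpt; apply: aU; rewrite /= lexx.
- by rewrite uf_mkpt => Vb; apply: (VJ b Vb); rewrite /= lexx.
- by rewrite /R_of /= !uf_mkpt.
Qed.

Lemma repr_sub S a b : subordination S ->
  S a b <-> (forall x y, R_of S (x, y) -> uf x a -> uf y b).
Proof.
move=> sS; split.
  by move=> Sab x y Rxy xa; apply: Rxy; exists a.
move=> h; apply: contrapT => nS.
have [x [y [xa nyb Rxy]]] := key_sub sS nS.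
by apply: nyb; exact: (h x y Rxy xa).
Qed.

Lemma R_of_dagger S : subordination S ->
  R_of (sub_dagger S) = rel_conv (R_of S).
Proof.
move=> sS; apply/seteqP; split => -[y x] /=.
- move=> h b [a xa Sab] /=; apply: contrapT => nyb.
  have ynb : uf y (~` b).
    by case: (ultra_compl b (uf_ultra y)).
  have : uf x (~` a).
    by apply: h; exists (~` b) => //; rewrite /sub_dagger !complK.
  by move=> xna; exact: (ultra_notboth (uf_ultra x) xa xna).
- move=> h a [b yb Sba]; rewrite /sub_dagger in Sba.
  apply: contrapT => nxa.
  have xna : uf x (~` a) by case: (ultra_compl a (uf_ultra x)).
  have : uf y (~` b) by apply: h; exists (~` a).
  by move=> ynb; exact: (ultra_notboth (uf_ultra y) yb ynb).
Qed.

Lemma R_of_meet S1 S2 M : subordination S1 -> subordination S2 ->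
  sub_is_meet S1 S2 M -> R_of M = (R_of S1 `&` R_of S2)%classic.
Proof.
move=> s1 s2 [sM l1 l2 lN]; apply/seteqP; split => -[x y] /=.
- move=> h; split => b [a xa Sab]; apply: h; exists a => //.
  + exact: l1.
  + exact: l2.
- move=> [h1 h2].
  pose N (a : A) (b : B) := uf x a -> uf y b.
  have sN : subordination N.
    split.
    - split; first by move=> /(ultra_bot (uf_ultra x)).
      by move=> _; exact: uf_top.
    - move=> a a' b Na Na' /(ultra_join (uf_ultra x)) [/Na|/Na'] //.
    - move=> a c e Nc Ne xa; apply: bfI; first exact: uf_filter.
      + exact: Nc. + exact: Ne.
    - move=> a a' c e aa' Na' ce xa; apply: bfS ce.
      + exact: uf_filter.
      + by apply: Na'; apply: bfS aa' => //; exact: uf_filter.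
  have MN : forall a b, M a b -> N a b.
    apply: lN => // a b Sab xa.
    + by apply: h1; exists a.
    + by apply: h2; exists a.
  by move=> b [a xa Mab]; exact: (MN a b Mab xa).
Qed.

Lemma sub_order S1 S2 : subordination S1 -> subordination S2 ->
  ((forall a b, S1 a b -> S2 a b) <-> R_of S2 `<=` R_of S1).
Proof.
move=> s1 s2; split.
  by move=> h [x y] /= R2 b [a xa S1ab]; apply: R2; exists a => //; exact: h.
move=> h a b S1ab; apply/(repr_sub _ _ s2) => x y R2 xa.
by have := h (x, y) R2; apply; exists a.
Qed.

End SubAlg.

Section SubAlg2.
Context {d1 d2 d3 : Order.disp_t} {A : ctbDistrLatticeType d1}
  {B : ctbDistrLatticeType d2} {C : ctbDistrLatticeType d3}.

Lemma R_of_comp (S : A -> B -> Prop) (T : B -> C -> Prop) :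
  subordination S -> subordination T ->
  R_of (sub_comp S T) = rel_comp (R_of S) (R_of T).
Proof.
move=> sS sT; apply/seteqP; split => -[x y] /=; last first.
  move=> [z [Rxz Rzy]] c [a xa [b [Sab Tbc]]] /=.
  by apply: Rzy; exists b => //; apply: Rxz; exists a.
move=> h.
have H1 : ba_filter (sub_image S (uf x)).
  exact: (sub_image_filter sS (uf_filter x)).
have H2 : ba_ideal [set b | exists2 c, T b c & ~ uf y c].
  split => /=.
  + by exists \bot; [exact: sub_bot|exact: ultra_bot (uf_ultra y)].
  + by move=> u v [c Tvc nyc] uv; exists c => //; exact: sub_mono Tvc _.
  + move=> u v [c Tuc nyc] [e Tve nye]; exists (c `|` e).
      apply: sub_join => //.
        by apply: sub_mono Tuc _; rewrite ?leUl.
      by apply: sub_mono Tve _; rewrite ?leUr.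
    by move/(ultra_join (uf_ultra y)) => [].
have H3 : forall b, sub_image S (uf x) b -> ~ (exists2 c, T b c & ~ uf y c).
  move=> b [a xa Sab] [c Tbc nyc]; apply: nyc; apply: h.
  by exists a => //; exists b.
have [U [uU SU UJ]] := @sep_ultra _ B (sub_image S (uf x))
   [set b | exists2 c, T b c & ~ uf y c] H1 H2 H3.
exists (mkpt uU); split; rewrite /R_of /= uf_mkpt //.
move=> c [b Ub Tbc]; apply: contrapT => nyc; apply: (UJ b Ub).
by exists c.
Qed.

End SubAlg2.

Lemma R_of_id {d} (A : ctbDistrLatticeType d) : R_of (sub_id A) = rel_id (Ult A).
Proof.
apply/seteqP; split => -[x y] /=.
- move=> h; apply: uf_inj; symmetry.
  case: (uf_ultra x) => _ _ mx; apply: mx.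
  + exact: uf_filter.
  + by move=> yb; apply: (ultra_bot (uf_ultra y)).
  + by move=> a xa; apply: h; exists a => //; exact: lexx.
- by rewrite /rel_id /= => <- b [a xa ab]; apply: bfS ab => //; exact: uf_filter.
Qed.

Lemma rel2_ext {X Y : Type} (P Q : X -> Y -> Prop) :
  (forall a b, P a b <-> Q a b) -> P = Q.
Proof. by move=> h; apply: funext => a; apply: funext => b; apply: propext. Qed.

Lemma id_sub {d} (A : ctbDistrLatticeType d) : subordination (sub_id A).
Proof.
rewrite /sub_id; split.
- by split.
- by move=> a b c ac bc; rewrite leUx ac bc.
- by move=> a c e ac ae; rewrite lexI ac ae.
- by move=> a b c e ab bc ce; apply: le_trans ce; exact: le_trans bc.
Qed.

Section Comp.
Context {d1 d2 d3 : Order.disp_t} {A : ctbDistrLatticeType d1}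
  {B : ctbDistrLatticeType d2} {C : ctbDistrLatticeType d3}.

Lemma comp_sub (S : A -> B -> Prop) (T : B -> C -> Prop) :
  subordination S -> subordination T -> subordination (sub_comp S T).
Proof.
move=> sS sT; split.
- by split; [exists \bot; split; apply: sub_bot|exists \top; split; apply: sub_top].
- move=> a a' c [b [Sab Tbc]] [b' [Sab' Tbc']]; exists (b `|` b'); split.
    apply: sub_join => //.
      by apply: sub_mono Sab _; rewrite ?leUl.
    by apply: sub_mono Sab' _; rewrite ?leUr.
  exact: sub_join.
- move=> a c e [b [Sab Tbc]] [b' [Sab' Tbe]]; exists (b `&` b'); split.
    exact: sub_meet.
  apply: sub_meet => //.
    by apply: sub_mono Tbc _; rewrite ?leIl.
  by apply: sub_mono Tbe _; rewrite ?leIr.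
- move=> a a' c e aa' [b [Sab Tbc]] ce; exists b; split.
    exact: sub_mono Sab _.
  exact: sub_mono Tbc ce.
Qed.

Lemma dagger_comp (S : A -> B -> Prop) (T : B -> C -> Prop) :
  sub_dagger (sub_comp S T) = sub_comp (sub_dagger T) (sub_dagger S).
Proof.
apply: rel2_ext => c a; rewrite /sub_dagger /sub_comp; split.
- by move=> [b [Sab Tbc]]; exists (~` b); rewrite complK.
- by move=> [b [Tbc Sab]]; exists (~` b).
Qed.

End Comp.

Section Dag.
Context {d1 d2 : Order.disp_t} {A : ctbDistrLatticeType d1}
  {B : ctbDistrLatticeType d2}.

Lemma dagger_sub (S : A -> B -> Prop) : subordination S -> subordination (sub_dagger S).
Proof.
move=> sS; rewrite /sub_dagger; split.
- by split => /=; rewrite ?compl0 ?compl1; [exact: sub_top|exact: sub_bot].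
- move=> b b' a Sb Sb' /=; rewrite complU; exact: sub_meet.
- move=> b a a' Sa Sa' /=; rewrite complI; exact: sub_join.
- move=> b b' a a' bb' Sb aa' /=.
  by apply: (sub_mono sS _ Sb); rewrite leC.
Qed.

Lemma daggerK (S : A -> B -> Prop) : sub_dagger (sub_dagger S) = S.
Proof. by apply: rel2_ext => a b; rewrite /sub_dagger !complK. Qed.

Lemma gen_meet (S1 S2 : A -> B -> Prop) : subordination S1 -> subordination S2 ->
  sub_is_meet S1 S2 (fun a b => forall N : A -> B -> Prop, subordination N ->
     (forall a b, S1 a b -> N a b) -> (forall a b, S2 a b -> N a b) -> N a b).
Proof.
move=> s1 s2; split.
- split.
  + by split => N sN _ _; [exact: sub_bot|exact: sub_top].
  + move=> a a' c h h' N sN h1 h2; apply: sub_join => //.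
    * exact: h. * exact: h'.
  + move=> a c e h h' N sN h1 h2; apply: sub_meet => //.
    * exact: h. * exact: h'.
  + move=> a a' c e aa' h ce N sN h1 h2; apply: sub_mono aa' _ ce => //.
    exact: h.
- by move=> a b S1ab N sN h1 h2; exact: h1.
- by move=> a b S2ab N sN h1 h2; exact: h2.
- by move=> N sN h1 h2 a b h; exact: h.
Qed.

End Dag.

Lemma meet_sub {d1 d2} {A : ctbDistrLatticeType d1} {B : ctbDistrLatticeType d2}
  (S1 S2 M : A -> B -> Prop) : sub_is_meet S1 S2 M -> subordination M.
Proof. by case. Qed.

Lemma BAS_allegory : BAS_is_allegory.
Proof.
split; first by move=> d A; exact: id_sub.
split; first by move=> *; exact: comp_sub.
split.
  move=> d1 d2 A B S sS; split; apply: rel2_ext => a b; rewrite /sub_comp /sub_id.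
  - split; first by move=> [a' [aa' Sa'b]]; exact: sub_mono aa' Sa'b (lexx _).
    by move=> Sab; exists a; split.
  - split; first by move=> [b' [Sab' b'b]]; exact: sub_mono (lexx _) Sab' b'b.
    by move=> Sab; exists b; split.
split.
  move=> d1 d2 d3 d4 A B C D S T U _ _ _; apply: rel2_ext => a e.
  rewrite /sub_comp; split.
  - by move=> [c [[b [Sab Tbc]] Uce]]; exists b; split => //; exists c.
  - by move=> [b [Sab [c [Tbc Uce]]]]; exists c; split => //; exists b.
split.
  move=> d1 d2 A B S S' S'' _ _ _; split.
  - by [].
  - by move=> h1 h2 a b /h2 /h1.
  - by move=> h1 h2; apply: rel2_ext => a b; split; [apply: h2|apply: h1].
split.
  move=> d1 d2 d3 A B C S S' T T' _ _ _ _ hS hT a c [b [Sab Tbc]].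
  by exists b; split; [exact: hS|exact: hT].
split; first by move=> *; exact: dagger_sub.
split.
  move=> d A; apply: rel2_ext => a b; rewrite /sub_dagger /sub_id leC; by [].
split; first by move=> *; exact: dagger_comp.
split; first by move=> *; exact: daggerK.
split; first by move=> d1 d2 A B S S' _ _ h b a; rewrite /sub_dagger; exact: h.
split; first by move=> d1 d2 A B S1 S2 s1 s2; eexists; exact: gen_meet.
move=> d1 d2 d3 C D E f g h M1 M2 sf sg sh m1 m2 c e [dd [fcd M2de]].
have sfg := comp_sub sf sg.
have sfh := comp_sub (dagger_sub sf) sh.
apply/(repr_sub _ _ (meet_sub m1)) => x y.
rewrite (R_of_meet sfg sh m1) (R_of_comp sf sg) => -[[z [Rxz Rzy]] Rxy] xc.
have zd : uf z dd by apply: Rxz; exists c.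
have := (proj1 (repr_sub dd e (meet_sub m2))) M2de z y; apply => //.
rewrite (R_of_meet sg sfh m2) (R_of_comp (dagger_sub sf) sh) (R_of_dagger sf).
by split => //; exists x.
Qed.

Lemma openX (T U : topologicalType) (P : set T) (Q : set U) :
  open P -> open Q -> open (P `*` Q)%classic.
Proof.
move=> oP oQ; rewrite openE => -[x y] [/= Px Qy].
exists (P, Q) => //=; split.
- exact: open_nbhs_nbhs.
- exact: open_nbhs_nbhs.
Qed.

Lemma fip (T : topologicalType) (I : Type) (D : set I) (f : I -> set T) :
  compact [set: T] -> (forall i, D i -> closed (f i)) -> (exists i, D i) ->
  (forall i j, D i -> D j -> exists2 k, D k & (f k `<=` f i `&` f j)%classic) ->
  (forall p, exists2 i, D i & ~ f i p) -> exists2 i, D i & f i = set0.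
Proof.
move=> cT cf neD dir noint; apply: contrapT => hne.
have ne i : D i -> f i !=set0.
  move=> Di; apply/set0P/negP => /eqP fi0; apply: hne; by exists i.
have FF : Filter (filter_from D f) by exact: filter_from_filter.
have PF : ProperFilter (filter_from D f) by exact: filter_from_proper.
have [p [_ clp]] := cT _ PF (ex_intro2 _ _ (proj1_sig (cid neD)) (proj2_sig (cid neD)) (@subsetT _ _)).
have [i Di nfi] := noint p; apply: nfi.
apply: (cf i Di) => B nB.
have [q [fq Bq]] := clp (f i) B (ex_intro2 _ _ i Di (@subset_refl _ _)) nB.
by exists q.
Qed.

Section UltTop.
Context {d : Order.disp_t} {A : ctbDistrLatticeType d}.

Local Notation P := {ptws A -> bool}.

Definition cyl (a : A) (b : bool) : set P := [set f | f a = b].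

Lemma cyl_open a b : open (cyl a b).
Proof.
have -> : cyl a b = (@proj A (fun _ => bool) a) @^-1` [set b] by [].
apply: open_comp; last exact: discrete_open.
by move=> f _; exact: proj_continuous.
Qed.

Lemma cyl_closed a b : closed (cyl a b).
Proof.
have -> : cyl a b = (~` cyl a (~~ b))%classic.
  by apply/seteqP; split => f /=; rewrite /cyl /=; case: (f a); case: b.
exact/open_closedC/cyl_open.
Qed.

Lemma val_cont : continuous (set_val : Ult A -> P).
Proof. exact: initial_continuous. Qed.

Definition phi (a : A) : set (Ult A) := [set x | uf x a].

Lemma phiE a : phi a = set_val @^-1` cyl a true.
Proof. by []. Qed.

Lemma phi_open a : open (phi a).
Proof.
rewrite phiE; apply: open_comp; last exact: cyl_open.
by move=> x _; exact: val_cont.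
Qed.

Lemma phiC a : phi (~` a) = (~` phi a)%classic.
Proof.
apply/seteqP; split => x /=.
- by move=> xna xa; exact: (ultra_notboth (uf_ultra x) xa xna).
- by move=> nxa; case: (ultra_compl a (uf_ultra x)).
Qed.

Lemma phi_closed a : closed (phi a).
Proof.
have -> : phi a = (~` phi (~` a)%O)%classic by rewrite phiC setCK.
exact/open_closedC/phi_open.
Qed.

Lemma phi_clopen a : clopen (phi a).
Proof. by split; [exact: phi_open|exact: phi_closed]. Qed.

Lemma phiI a b : phi (a `&` b) = (phi a `&` phi b)%classic.
Proof.
apply/seteqP; split => x /=.
- by move=> h; split; apply: (bfS (uf_filter x) h); rewrite ?leIl ?leIr.
- by move=> [xa xb]; apply: bfI => //; exact: uf_filter.
Qed.

Lemma phiU a b : phi (a `|` b) = (phi a `|` phi b)%classic.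
Proof.
apply/seteqP; split => x /=.
- by move/(ultra_join (uf_ultra x)).
- by move=> [xa|xb]; [apply: (bfS (uf_filter x) xa)|apply: (bfS (uf_filter x) xb)];
    rewrite ?leUl ?leUr.
Qed.

Lemma phi0 : phi \bot = set0.
Proof. by apply/seteqP; split => x //= /(ultra_bot (uf_ultra x)). Qed.

Lemma phi1 : phi \top = setT.
Proof. by apply/seteqP; split => x //= _; exact: uf_top. Qed.

Lemma uf_neq (x y : Ult A) : x <> y -> exists a, uf x a /\ ~ uf y a.
Proof.
move=> nxy; apply: contrapT => h; apply: nxy; apply: uf_inj.
case: (uf_ultra y) => _ _ mx; apply: mx.
- exact: uf_filter.
- exact: (ultra_bot (uf_ultra x)).
- move=> a ya; apply: contrapT => nxa.
  have xna : uf x (~` a) by case: (ultra_compl a (uf_ultra x)).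
  apply: h; exists (~` a); split => // yna.
  exact: (ultra_notboth (uf_ultra y) ya yna).
Qed.

Lemma ult_pointsE (f : A -> bool) : ult_points f <->
  [/\ f \top, ~~ f \bot, (forall a b, f (a `&` b) = f a && f b) &
      (forall a, f (~` a) = ~~ f a)].
Proof.
rewrite /ult_points /=; split.
- move=> uf_; have fF := ultra_filter uf_.
  split.
  + exact: bf_top fF.
  + by apply/negP => /(ultra_bot uf_).
  + move=> a b; apply/idP/andP.
    * by move=> h; split; apply: bfS fF h _; rewrite ?leIl ?leIr.
    * by move=> [h1 h2]; apply: bfI fF h1 h2.
  + move=> a; apply/idP/negP.
    * by move=> h1 h2; exact: (ultra_notboth uf_ h2 h1).
    * by move=> h; case: (ultra_compl a uf_).
- move=> [f1 f0 fI fC]; apply: complete_ultra.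
  + split => //.
    * by move=> a b fa /meet_idPl ab; move: (fI a b); rewrite ab fa /= => <-.
    * by move=> a b fa fb /=; rewrite fI fa fb.
  + by move=> /= h; rewrite h in f0.
  + by move=> a /=; rewrite fC; case: (f a); [left|right].
Qed.

Lemma ult_points_closed : closed (@ult_points d A).
Proof.
have -> : @ult_points d A =
  ([set f : P | f \top] `&` [set f : P | ~~ f \bot] `&`
  (\bigcap_(ab in [set: A * A])
     ((cyl ab.1 true `&` cyl ab.2 true `&` cyl (ab.1 `&` ab.2)%O true) `|`
      (cyl ab.1 false `&` cyl (ab.1 `&` ab.2)%O false) `|`
      (cyl ab.2 false `&` cyl (ab.1 `&` ab.2)%O false))) `&`
  (\bigcap_(a in [set: A])
     ((cyl a true `&` cyl (~` a)%O false) `|` (cyl a false `&` cyl (~` a)%O true))))%classic.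
  apply/seteqP; split => f.
  - move=> /ult_pointsE [f1 f0 fI fC]; split; [split; [split|]|] => //.
    + move=> [a b] _ /=; rewrite /cyl /= fI.
      by case: (f a); case: (f b); [left; left|right|left; right|right].
    + by move=> a _ /=; rewrite /cyl /= fC; case: (f a); [left|right].
  - move=> [[[f1 f0] fI] fC]; apply/ult_pointsE; split => //.
    + move=> a b; have := fI (a, b) I; rewrite /cyl /=.
      by move=> [[[[-> ->] ->]|[-> ->]]|[-> ->]]; rewrite ?andbF.
    + by move=> a; have := fC a I; rewrite /cyl /= => -[[-> ->]|[-> ->]].
apply: closedI; [apply: closedI; [apply: closedI|]|].
- have -> : [set f : P | f \top] = cyl \top true by [].
  exact: cyl_closed.
- have -> : [set f : P | ~~ f \bot] = cyl \bot false.
    by apply/seteqP; split => f; rewrite /cyl /=; case: (f \bot).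
  exact: cyl_closed.
- apply: closed_bigI => -[a b] _ /=.
  by repeat apply: closedU; repeat apply: closedI; exact: cyl_closed.
- apply: closed_bigI => a _ /=.
  by repeat apply: closedU; repeat apply: closedI; exact: cyl_closed.
Qed.

Lemma Ult_compact : compact [set: Ult A].
Proof.
have cP : compact [set: P].
  have := @tychonoff _ (fun _ : A => bool) _ (fun=> bool_compact).
  by congr (compact _); rewrite eqEsubset.
have cU : compact (@ult_points d A).
  exact: (subclosed_compact ult_points_closed cP).
move=> F PF _.
have [p [up clp]] := cU (set_val @ F) (fmap_proper_filter _ PF)
  (filterS (fun x _ => set_valP x) filterT).
exists (SigSub (mem_set up)); split => // U B FU nB.
rewrite nbhsE in nB; case: nB => O [oO Ox] OB.
case: oO => G oG GO.
have nG : nbhs p G.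
  apply: open_nbhs_nbhs; split => //.
  by have := Ox; rewrite -GO.
have FU' : (set_val @ F) (set_val @` U).
  by move: FU; apply: (@filterS _ F PF U); move=> x Ux /=; exists x.
have [q [[u Uu <-] Gu]] := clp _ _ FU' nG.
exists u; split => //; apply: OB; rewrite -GO; exact: Gu.
Qed.

Lemma Ult_stone : stone_space (Ult A).
Proof.
split.
- exact: Ult_compact.
- rewrite open_hausdorff => x y /eqP nxy.
  have [a [xa nya]] := uf_neq nxy.
  exists (phi a, phi (~` a)).
  + rewrite !inE /=; split => //.
    by case: (ultra_compl a (uf_ultra y)).
  + split; [exact: phi_open|exact: phi_open|].
    by apply/eqP; rewrite /= phiC setICr.
- move=> x y /eqP nxy; have [a [xa nya]] := uf_neq nxy.
  by exists (phi a); split => //; exact: phi_clopen.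
Qed.

End UltTop.

Lemma R_of_closed {d1 d2} {A : ctbDistrLatticeType d1} {B : ctbDistrLatticeType d2}
  (S : A -> B -> Prop) : subordination S -> closed (R_of S).
Proof.
move=> sS; rewrite -[R_of S]setCK closedC.
have -> : (~` R_of S = \bigcup_(ab in [set ab : A * B | S ab.1 ab.2])
     (phi ab.1 `*` phi (~` ab.2)%O))%classic.
  apply/seteqP; split => -[x y] /=.
  - move=> nR; apply: contrapT => h; apply: nR => b [a xa Sab].
    apply: contrapT => nyb; apply: h; exists (a, b) => //; split => //=.
    by case: (ultra_compl b (uf_ultra y)).
  - move=> [[a b] /= Sab [/= xa ynb]] R.
    have yb : uf y b by apply: R; exists a.
    exact: (ultra_notboth (uf_ultra y) yb ynb).
apply: bigcup_open => -[a b] _; apply: openX; exact: phi_open.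
Qed.

Section Crep.
Context {d : Order.disp_t} {A : ctbDistrLatticeType d}.

Lemma phi_le (a b : A) : (phi a `<=` phi b)%classic -> a <= b.
Proof.
move=> h; apply: contrapT => nab.
have H1 : ba_filter [set c : A | a `&` ~` b <= c].
  split => /=; first exact: lex1.
    by move=> u v /= au uv; exact: le_trans uv.
  by move=> u v au av /=; rewrite lexI au av.
have H2 : ba_ideal [set c : A | c <= \bot].
  split => /=; first by rewrite lexx.
  + by move=> u v vb uv; exact: le_trans vb.
  + by move=> u v ub vb; rewrite leUx ub vb.
have H3 : forall c, a `&` ~` b <= c -> ~ c <= \bot.
  move=> c le1 le2; apply: nab; have : a `&` ~` b <= \bot by exact: le_trans le2.
  by rewrite lex0 disj_leC complK.
have [U [uU aU _]] := sep_ultra H1 H2 H3.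
have Uab : U (a `&` ~` b) by apply: aU; rewrite /= lexx.
pose x := mkpt uU.
have xa : phi a x by rewrite /phi /= uf_mkpt; apply: (bfS (ultra_filter uU) Uab); rewrite leIl.
have xnb : phi (~` b) x by rewrite /phi /= uf_mkpt; apply: (bfS (ultra_filter uU) Uab); rewrite leIr.
by move: xnb; rewrite phiC => /(_ (h _ xa)).
Qed.

Lemma crep_local (U : set (Ult A)) (x : Ult A) : clopen U -> U x ->
  exists2 a, uf x a & (phi a `<=` U)%classic.
Proof.
move=> [oU cU] Ux.
have := @fip (Ult A) A (uf x) (fun a => ~` U `&` phi a)%classic Ult_compact.
case.
- move=> a _; apply: closedI; last exact: phi_closed.
  exact: open_closedC.
- by exists \top; exact: uf_top.
- move=> a b xa xb; exists (a `&` b); first exact: bfI (uf_filter x) xa xb.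
  by rewrite phiI => p [nUp [pa pb]]; split; split.
- move=> p; apply: contrapT => hp.
  have sub : (uf x `<=` uf p)%classic.
    move=> a xa; apply: contrapT => npa; apply: hp; exists a => //.
    by move=> [].
  have xp : x = p.
    apply: uf_inj; case: (uf_ultra x) => _ _ mx; symmetry; apply: mx => //.
    + exact: uf_filter.
    + exact: (ultra_bot (uf_ultra p)).
  have := hp; apply; exists \top; first exact: uf_top.
  move=> [nUp _]; apply: nUp; by rewrite -xp.
- move=> a xa e; exists a => // y ya; apply: contrapT => nUy.
  have : ((~` U `&` phi a)%classic y) by [].
  by rewrite e.
Qed.

Lemma crep (U : set (Ult A)) : clopen U -> exists a, U = phi a.
Proof.
move=> clU; have [oU cU] := clU.
have := @fip (Ult A) A [set a | (phi a `<=` U)%classic]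
  (fun a => U `&` phi (~` a)%O)%classic Ult_compact.
case.
- by move=> a _; apply: closedI => //; exact: phi_closed.
- by exists \bot; rewrite /= phi0.
- move=> a b ha hb; exists (a `|` b).
    by rewrite /= phiU => y [/ha|/hb].
  by rewrite complU phiI => p [Up [pa pb]]; split; split.
- move=> p; apply: contrapT => hp.
  have [Up|nUp] := pselect (U p); last first.
    by apply: hp; exists \bot; [rewrite /= phi0|move=> []].
  have [a pa sa] := crep_local clU Up.
  apply: hp; exists a => //; move=> [_]; rewrite phiC; exact.
- move=> a sa e; exists a; apply/seteqP; split => // y Uy.
  apply: contrapT => nya.
  have : ((U `&` phi (~` a)%O)%classic y) by split => //; rewrite phiC.
  by rewrite e.
Qed.

End Crep.

Lemma closedX (T U : topologicalType) (P : set T) (Q : set U) :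
  closed P -> closed Q -> closed (P `*` Q)%classic.
Proof.
move=> cP cQ; rewrite -[(P `*` Q)%classic]setCK closedC.
have -> : (~` (P `*` Q) = (~` P `*` setT) `|` (setT `*` ~` Q))%classic.
  apply/seteqP; split => -[x y] /=.
  - move=> h; have [Px|nPx] := pselect (P x); last by left.
    by right; split => // Qy; apply: h.
  - by move=> [[nPx _]|[_ nQy]] [].
have oP : open (~` P)%classic by rewrite -closedC setCK.
have oQ : open (~` Q)%classic by rewrite -closedC setCK.
by apply: openU; apply: openX => //; exact: openT.
Qed.

Section ClopBasic.
Variable X : topologicalType.
Implicit Types U V : Clop X.

Lemma vI U V : val (U `&` V) = (val U `&` val V)%classic. Proof. by []. Qed.
Lemma vU U V : val (U `|` V) = (val U `|` val V)%classic. Proof. by []. Qed.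
Lemma vC U : val (~` U) = (~` val U)%classic. Proof. by []. Qed.
Lemma v0 : val (\bot : Clop X) = set0. Proof. by []. Qed.
Lemma v1 : val (\top : Clop X) = setT. Proof. by []. Qed.
Lemma vle U V : (U <= V) <-> (val U `<=` val V)%classic.
Proof.
split.
- move=> /meet_idPl <-; rewrite vI; exact: subIsetr.
- move=> h; apply/meet_idPl; apply: val_inj; rewrite vI; exact/setIidl.
Qed.
Lemma vclopen U : clopen (val U). Proof. exact: (set_valP U). Qed.

Definition toclop (C : set X) (h : clopen C) : Clop X := SigSub (mem_set h).
Lemma val_toclop C h : val (@toclop C h) = C. Proof. by []. Qed.

Lemma eta_ultra (x : X) : @ba_ultrafilter _ (Clop X) [set U : Clop X | val U x].
Proof.
apply: complete_ultra.
- split => /=.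
  + by [].
  + by move=> U V Ux /vle; apply.
  + by move=> U V Ux Vx; split.
- by [].
- by move=> U /=; have [h|h] := pselect (val U x); [left|right].
Qed.

Definition etapt (x : X) : Ult (Clop X) := @mkpt _ (Clop X) _ (eta_ultra x).

Lemma uf_eta x U : uf (etapt x) U = val U x.
Proof. by rewrite /etapt uf_mkpt. Qed.

Lemma uf_etaP x U : uf (etapt x) U -> val U x.
Proof. by rewrite uf_eta. Qed.
Lemma uf_etaI x U : val U x -> uf (etapt x) U.
Proof. by rewrite uf_eta. Qed.

Definition etaR : set (X * Ult (Clop X)) := [set p | p.2 = etapt p.1].

Lemma etaR_closed : closed etaR.
Proof.
rewrite -[etaR]setCK closedC.
have -> : (~` etaR = \bigcup_(U in [set: Clop X]) (val (~` U)%O `*` phi U))%classic.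
  apply/seteqP; split => -[x q] /=.
  - rewrite /etaR /= => nq.
    have [U [qU nU]] := uf_neq nq.
    by exists U => //; split => //=; move=> h; apply: nU; rewrite uf_eta.
  - move=> [U _ [/= nUx qU]] e; rewrite /etaR /= in e.
    by rewrite e in qU; exact: nUx (uf_etaP qU).
apply: bigcup_open => U _; apply: openX; last exact: phi_open.
exact: (proj1 (vclopen (~` U)%O)).
Qed.

Lemma etaRconv_closed : closed (rel_conv etaR).
Proof.
rewrite -[rel_conv etaR]setCK closedC.
have -> : (~` rel_conv etaR = \bigcup_(U in [set: Clop X]) (phi U `*` val (~` U)%O))%classic.
  apply/seteqP; split => -[q x] /=.
  - rewrite /rel_conv /etaR /= => nq.
    have [U [qU nU]] := uf_neq nq.
    by exists U => //; split => //=; move=> h; apply: nU; rewrite uf_eta.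
  - move=> [U _ [/= qU nUx]] e; rewrite /rel_conv /etaR /= in e.
    by rewrite e in qU; exact: nUx (uf_etaP qU).
apply: bigcup_open => U _; apply: openX; first exact: phi_open.
exact: (proj1 (vclopen (~` U)%O)).
Qed.

Hypothesis sX : stone_space X.

Lemma etapt_inj : injective etapt.
Proof.
move=> x y e; apply: contrapT => nxy.
case: sX => _ _ zd; have [C [clC Cx nCy]] := zd x y (introN eqP nxy).
have := congr1 (fun p => uf p (toclop clC)) e; rewrite !uf_eta !val_toclop.
by move=> h; apply: nCy; rewrite -h.
Qed.

Lemma etapt_surj (p : Ult (Clop X)) : exists x, p = etapt x.
Proof.
case: sX => cX _ _.
have [x hx] : exists x, forall U, uf p U -> val U x.
  apply: contrapT => hn.
  have := @fip X (Clop X) (uf p) (fun U => val U) cX.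
  case.
  - by move=> U _; exact: (proj2 (vclopen U)).
  - by exists \top; exact: uf_top.
  - move=> U V pU pV; exists (U `&` V); first exact: bfI (uf_filter p) pU pV.
    by rewrite vI.
  - move=> y; apply: contrapT => hy; apply: hn; exists y => U pU.
    by apply: contrapT => nU; apply: hy; exists U.
  - move=> U pU U0; apply: (ultra_bot (uf_ultra p)).
    suff <- : U = \bot by [].
    by apply: val_inj; rewrite U0 v0.
exists x; apply: uf_inj; case: (uf_ultra p) => _ _ mx; symmetry; apply: mx.
- exact: uf_filter.
- exact: (ultra_bot (uf_ultra (etapt x))).
- by move=> U pU; rewrite uf_eta; exact: hx.
Qed.

End ClopBasic.

Arguments etapt {X}.

Section Nat.
Variables X Y : topologicalType.
Hypotheses (sX : stone_space X) (sY : stone_space Y).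

Lemma box (R : set (X * Y)) x y : closed R -> ~ R (x, y) ->
  exists U : Clop X, exists V : Clop Y, [/\ val U x, val V y &
     forall x' y', val U x' -> val V y' -> ~ R (x', y')].
Proof.
move=> cR nR.
case: sX => cX _ zX; case: sY => cY _ zY.
have cXY : compact [set: X * Y].
  by rewrite -setXTT; exact: compact_setX.
have := @fip (X * Y)%type (Clop X * Clop Y)%type
  [set UV | val UV.1 x /\ val UV.2 y]
  (fun UV => R `&` (val UV.1 `*` val UV.2))%classic cXY.
case.
- move=> UV _; apply: closedI => //; apply: closedX;
    exact: (proj2 (vclopen _)).
- by exists (\top, \top).
- move=> [U V] [U' V'] [/= Ux Vy] [/= U'x V'y]; exists (U `&` U', V `&` V').
    by split; split.
  by move=> [a b] /= [Rab [/= [? ?] [? ?]]]; split; split.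
- move=> [x' y'].
  have [Rp|nRp] := pselect (R (x', y')); last first.
    by exists (\top, \top) => //= -[].
  have [ex|nex] := pselect (x' = x); last first.
    have [C [clC Cx nCx']] := zX x x' (introN eqP (nesym nex)).
    by exists (toclop clC, \top) => //= -[_ [/=]].
  have [ey|ney] := pselect (y' = y); last first.
    have [C [clC Cy nCy']] := zY y y' (introN eqP (nesym ney)).
    by exists (\top, toclop clC) => //= -[_ [_ /=]].
  by exfalso; apply: nR; rewrite -ex -ey.
- move=> [U V] [/= Ux Vy] e; exists U, V; split => // x' y' Ux' Vy' Rp.
  have : (R `&` (val U `*` val V))%classic (x', y') by [].
  by rewrite e.
Qed.

Lemma natural (R : set (X * Y)) x y : closed R ->
  R_of (S_of R) (etapt x, etapt y) <-> R (x, y).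
Proof.
move=> cR; split; last first.
  move=> Rxy V [U Ux SUV] /=; apply: uf_etaI; apply: SUV.
  by exists x => //; exact: uf_etaP.
move=> h; apply: contrapT => nR.
have [U [V [Ux Vy hUV]]] := box cR nR.
have : uf (etapt y) (~` V)%O.
  apply: h; exists U; first exact: uf_etaI.
  move=> y' [x' Ux' Rx'y'] /= Vy'.
  exact: (hUV x' y' Ux' Vy' Rx'y').
by move/uf_etaP => /(_ Vy).
Qed.

End Nat.

Lemma S_of_sub (X Y : topologicalType) (R : set (X * Y)) : subordination (S_of R).
Proof.
rewrite /S_of; split.
- split; first by move=> y [x []].
  by move=> y _.
- move=> U U' V h h' y [x [Ux|U'x] Rxy].
  + by apply: h; exists x.
  + by apply: h'; exists x.
- by move=> U V W h h' y Ry; split; [exact: h|exact: h'].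
- move=> U U' V W /vle UU' h /vle VW y [x Ux Rxy]; apply: VW; apply: h.
  by exists x => //; exact: UU'.
Qed.

Section ClopMorph.
Variables X Y Z : topologicalType.

Lemma S_of_conv (R : set (X * Y)) :
  S_of (rel_conv R) = sub_dagger (S_of R).
Proof.
apply: rel2_ext => V U; rewrite /S_of /sub_dagger /rel_image /rel_conv /=; split.
- move=> h y [x /= nUx Rxy] Vy; apply: nUx; apply: h; by exists y.
- move=> h x [y Vy Rxy]; apply: contrapT => nUx.
  by apply: (h y) => //; exists x.
Qed.

Lemma S_of_le (R1 R2 : set (X * Y)) : stone_space X -> stone_space Y ->
  closed R1 -> closed R2 ->
  (R1 `<=` R2 <-> (forall U V, S_of R2 U V -> S_of R1 U V)).
Proof.
move=> sX sY c1 c2; split.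
  by move=> h U V h2 y [x Ux R1xy]; apply: h2; exists x => //; exact: h.
move=> h [x y] R1xy.
apply/(natural sX sY _ _ c2) => V [U Ux S2UV].
apply: uf_etaI; apply: (h U V S2UV); exists x => //; exact: uf_etaP.
Qed.

Lemma S_of_meet (R1 R2 : set (X * Y)) : stone_space X -> stone_space Y ->
  closed R1 -> closed R2 ->
  sub_is_meet (S_of R1) (S_of R2) (S_of (R1 `&` R2)%classic).
Proof.
move=> sX sY c1 c2.
have s1 := S_of_sub R1; have s2 := S_of_sub R2.
split.
- exact: S_of_sub.
- by move=> U V h y [x Ux [R1xy _]]; apply: h; exists x.
- by move=> U V h y [x Ux [_ R2xy]]; apply: h; exists x.
move=> N sN h1 h2 U V hM.
have m := gen_meet s1 s2.
suff : (fun a b => forall N : Clop X -> Clop Y -> Prop, subordination N ->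
     (forall a b, S_of R1 a b -> N a b) -> (forall a b, S_of R2 a b -> N a b) ->
     N a b) U V by move=> /(_ N sN h1 h2).
apply/(repr_sub _ _ (meet_sub m)) => p q.
rewrite (R_of_meet s1 s2 m) => -[Rp1 Rp2] pU.
have [x ex] := etapt_surj sX p; have [y ey] := etapt_surj sY q.
subst p q.
apply: uf_etaI; apply: hM; exists x; first exact: uf_etaP pU.
split.
- exact/(natural sX sY _ _ c1).
- exact/(natural sX sY _ _ c2).
Qed.

End ClopMorph.

Lemma S_of_comp (X Y Z : topologicalType) (R : set (X * Y)) (R' : set (Y * Z)) :
  stone_space X -> stone_space Y -> stone_space Z -> closed R -> closed R' ->
  S_of (rel_comp R R') = sub_comp (S_of R) (S_of R').
Proof.
move=> sX sY sZ cR cR'.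
have sT := comp_sub (S_of_sub R) (S_of_sub R').
apply: rel2_ext => U W; split.
- move=> h; apply/(repr_sub _ _ sT) => p r.
  rewrite (R_of_comp (S_of_sub R) (S_of_sub R')) => -[q [Rpq Rqr]] pU.
  have [x ex] := etapt_surj sX p; have [y ey] := etapt_surj sY q.
  have [z ez] := etapt_surj sZ r; subst p q r.
  apply: uf_etaI; apply: h; exists x; first exact: uf_etaP pU.
  exists y; split.
  + exact/(natural sX sY _ _ cR).
  + exact/(natural sY sZ _ _ cR').
- move=> TUW z [x Ux [y [Rxy R'yz]]].
  have := proj1 (repr_sub U W sT) TUW (etapt x) (etapt z).
  move=> h; apply: uf_etaP; apply: h; last exact: uf_etaI.
  rewrite (R_of_comp (S_of_sub R) (S_of_sub R')); exists (etapt y); split.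
  + exact/(natural sX sY _ _ cR).
  + exact/(natural sY sZ _ _ cR').
Qed.

Lemma S_of_id (X : topologicalType) : S_of (rel_id X) = sub_id (Clop X).
Proof.
apply: rel2_ext => U V; rewrite /S_of /sub_id; split.
- by move=> h; apply/vle => x Ux; apply: h; exists x.
- by move/vle => h x [y Uy]; rewrite /rel_id /= => <-; exact: h.
Qed.

Lemma Clop_morph : Clop_is_allegory_morphism.
Proof.
split; first by move=> X Y R _ _ _; exact: S_of_sub.
split; first by move=> X _; exact: S_of_id.
split; first by move=> *; exact: S_of_comp.
split; first by move=> *; exact: S_of_meet.
by move=> *; exact: S_of_conv.
Qed.

Lemma Ult_morph : Ult_is_allegory_morphism.
Proof.
split; first by move=> d A; exact: Ult_stone.
split; first by move=> *; exact: R_of_closed.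
split; first by move=> d A; exact: R_of_id.
split; first by move=> *; exact: R_of_comp.
split; first by move=> *; exact: R_of_meet.
by move=> *; exact: R_of_dagger.
Qed.

Lemma eta_iso (X : topologicalType) : stone_space X -> stone_iso (@etaR X).
Proof.
move=> sX; split; first exact: etaR_closed.
exists (rel_conv (@etaR X)); split.
- exact: etaRconv_closed.
- apply/seteqP; split => -[x x'] /=.
  + by move=> [q [/= e1 e2]]; rewrite /rel_id /=; apply: (etapt_inj sX);
      rewrite /etaR /rel_conv /= in e1 e2; rewrite -e1 -e2.
  + by rewrite /rel_id /= => <-; exists (etapt x).
- apply/seteqP; split => -[p p'] /=.
  + by move=> [x [e1 e2]]; rewrite /rel_id /=;
      rewrite /etaR /rel_conv /= in e1 e2; rewrite e1 e2.
  + rewrite /rel_id /= => <-; have [x ex] := etapt_surj sX p.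
    by exists x; split.
Qed.

Lemma eta_nat (X Y : topologicalType) (R : set (X * Y)) :
  stone_space X -> stone_space Y -> closed R ->
  rel_comp (@etaR X) (R_of (S_of R)) = rel_comp R (@etaR Y).
Proof.
move=> sX sY cR; apply/seteqP; split => -[x q'] /=.
- move=> [q [e Rq]]; rewrite /etaR /= in e; subst q.
  have [y ey] := etapt_surj sY q'; subst q'.
  by exists y; split => //; exact/(natural sX sY _ _ cR).
- move=> [y [Rxy e]]; rewrite /etaR /= in e; subst q'.
  by exists (etapt x); split => //; exact/(natural sX sY _ _ cR).
Qed.

Section Eps.
Context {d : Order.disp_t} {A : ctbDistrLatticeType d}.

Definition eps (U : Clop (Ult A)) (a : A) : Prop := (val U `<=` phi a)%classic.
Definition eps' (a : A) (U : Clop (Ult A)) : Prop := (phi a `<=` val U)%classic.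

Definition phic (a : A) : Clop (Ult A) := toclop (phi_clopen a).

Lemma eps_sub : subordination eps.
Proof.
rewrite /eps; split.
- by split => // x _; exact: uf_top.
- by move=> U U' a h h' x [/h|/h'].
- by move=> U a b h h'; rewrite phiI => x Ux; split; [exact: h|exact: h'].
- move=> U U' a b /vle UU' h ab x /UU' /h xa /=.
  exact: (bfS (uf_filter x) xa ab).
Qed.

Lemma eps'_sub : subordination eps'.
Proof.
rewrite /eps'; split.
- by split => // x /= /(ultra_bot (uf_ultra x)).
- by move=> a a' U h h'; rewrite phiU => x [/h|/h'].
- by move=> a U V h h' x xa; split; [exact: h|exact: h'].
- move=> a a' U V aa' h /vle UV x xa; apply: UV; apply: h.
  exact: (bfS (uf_filter x) xa aa').
Qed.

Lemma eps_iso : sub_iso eps.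
Proof.
split; first exact: eps_sub.
exists eps'; split.
- exact: eps'_sub.
- apply: rel2_ext => U U'; rewrite /sub_comp /eps /eps' /sub_id; split.
  + by move=> [a [h h']]; apply/vle => x /h /h'.
  + move=> /vle h; have [a ea] := crep (vclopen U).
    by exists a; split; rewrite -ea.
- apply: rel2_ext => a b; rewrite /sub_comp /eps /eps' /sub_id; split.
  + by move=> [U [h h']]; apply: phi_le => x /h /h'.
  + move=> ab; exists (phic a); split => // x xa.
    exact: (bfS (uf_filter x) xa ab).
Qed.

End Eps.

Lemma eps_nat {d1 d2} (A : ctbDistrLatticeType d1) (B : ctbDistrLatticeType d2)
  (S : A -> B -> Prop) : subordination S ->
  sub_comp (@eps _ A) S = sub_comp (S_of (R_of S)) (@eps _ B).
Proof.
move=> sS; apply: rel2_ext => U c; rewrite /sub_comp /eps; split.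
- move=> [a [Ua Sac]]; exists (phic c); split => //.
  move=> y [x Ux Rxy]; apply: Rxy; exists a => //; exact: Ua.
- move=> [V [h Vc]]; have [a ea] := crep (vclopen U).
  exists a; split; first by rewrite ea.
  apply/(repr_sub _ _ sS) => x y Rxy xa; apply: Vc; apply: h.
  by exists x => //; rewrite ea.
Qed.

Lemma quasi_inv : Clop_Ult_quasi_inverse.
Proof.
split.
- exists (fun X => @etaR X); split.
  + by move=> X sX; exact: eta_iso.
  + by move=> X Y R sX sY cR; exact: eta_nat.
- exists (fun d A => @eps d A); split.
  + by move=> d A; exact: eps_iso.
  + by move=> d1 d2 A B S sS; exact: eps_nat.
Qed.

Local Close Scope order_scope.

Theorem theorem2p12 :
  BAS_is_allegory /\
  Clop_is_allegory_morphism /\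
  Ult_is_allegory_morphism /\
  Clop_Ult_quasi_inverse /\
  (* R1 <= R2  iff  S_{R2} <= S_{R1} (as relations) *)
  (forall (X Y : topologicalType) (R1 R2 : set (X * Y)),
     stone_space X -> stone_space Y -> closed R1 -> closed R2 ->
     (R1 `<=` R2 <-> (forall U V, S_of R2 U V -> S_of R1 U V))) /\
  (* S1 <= S2 (as relations) iff R_{S2} <= R_{S1} *)
  (forall d1 d2 (A : ctbDistrLatticeType d1) (B : ctbDistrLatticeType d2)
     (S1 S2 : A -> B -> Prop), subordination S1 -> subordination S2 ->
     ((forall a b, S1 a b -> S2 a b) <-> R_of S2 `<=` R_of S1)) /\
  (* S_{converse R} = (S_R)^dagger *)
  (forall (X Y : topologicalType) (R : set (X * Y)),
     stone_space X -> stone_space Y -> closed R ->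
     S_of (rel_conv R) = sub_dagger (S_of R)) /\
  (* R_{S^dagger} = converse (R_S) *)
  (forall d1 d2 (A : ctbDistrLatticeType d1) (B : ctbDistrLatticeType d2)
     (S : A -> B -> Prop), subordination S ->
     R_of (sub_dagger S) = rel_conv (R_of S)).
Proof.
split; first exact: BAS_allegory.
split; first exact: Clop_morph.
split; first exact: Ult_morph.
split; first exact: quasi_inv.
split; first by move=> *; exact: S_of_le.
split; first by move=> *; exact: sub_order.
split; first by move=> *; exact: S_of_conv.
by move=> *; exact: R_of_dagger.
Qed.
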